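(* Let $p\ge5$. For every assignment $\alpha$ on the white metallic tree, $\mathcal W_\alpha$ possesses the preferred son property: for every node $\nu$, exactly one son of $\nu$ in $\mathcal W_\alpha$ has metallic code ending with $0$, and the metallic code of that son is the metallic code of $\nu$ followed by $0$ (this son is called the preferred son of $\nu$). Moreover, for every $n\ge0$, $m_{n+1}$ is the preferred son of $m_n$ in $\mathcal W_\alpha$.
   Context: Fix $p\ge5$. Metallic numbers: $m_{-1}=0$, $m_0=1$, $m_{n+2}=(p-2)m_{n+1}-m_n$. With $d=p-3$, $c=p-4$, the metallic code of a positive integer $n$ is the unique word $a_k\cdots a_0$ over $\{0,\dots,p-3\}$ with $a_k\ne0$, $n=\sum a_im_i$, containing no factor $d\,c^j\,d$ ($j\ge0$). White metallic tree under an assignment $\alpha$, $\mathcal W_\alpha$: nodes are the positive integers, each black or white; root $1$ is white; nodes are processed in increasing order and node $\nu$ receives $p-2$ sons if white and $p-3$ sons if black, namely the smallest integers not yet used, in increasing order; an assignment specifies, for each node, the position (leftmost = $1$) of its unique black son among its sons (possibly depending on the node), other sons being white. *)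

(* Defs.v *)
From mathcomp Require Import all_boot.
Set Implicit Arguments. Unset Strict Implicit. Unset Printing Implicit Defensive.

(* Metallic numbers: m_{-1} = 0, m_0 = 1, m_{n+2} = (p-2) m_{n+1} - m_n.
   metal_pair p n = (m_{n-1}, m_n).  For p >= 5 the sequence is increasing,
   so the truncated subtraction never truncates. *)
Fixpoint metal_pair (p n : nat) : nat * nat :=
  match n with
  | 0 => (0, 1)
  | n'.+1 => let: (a, b) := metal_pair p n' in (b, (p - 2) * b - a)
  end.

Definition metal (p n : nat) : nat := (metal_pair p n).2.

(* Words are written most significant digit first: w = [:: a_k; ...; a_0]. *)
Definition word_value (p : nat) (w : seq nat) : nat :=
  \sum_(i < size w) nth 0 (rev w) i * metal p i.

(* w contains a factor d c^j d, with d = p-3, c = p-4. *)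
Definition has_forbidden_factor (p : nat) (w : seq nat) : Prop :=
  exists j : nat, infix ((p - 3) :: rcons (nseq j (p - 4)) (p - 3)) w.

Definition is_metallic_code (p n : nat) (w : seq nat) : Prop :=
  [/\ all (fun a => a <= p - 3) w, head 0 w != 0, word_value p w = n
    & ~ has_forbidden_factor p w].

Definition code_ends0 (p n : nat) : Prop :=
  exists w, is_metallic_code p n w /\ last 1 w = 0.

(* ---- White metallic tree W_alpha ----
   Nodes are positive integers; node x is stored at index x-1 of a colour list
   (true = white, false = black).  build p alpha n = colours of nodes
   1, 2, ..., L after nodes 1..n have been processed (received their sons).
   Node nu receives p-2 sons if white, p-3 if black, namely the next unused
   integers; the son at position alpha nu (leftmost = 1) is black, the others
   white. *)
Fixpoint build (p : nat) (alpha : nat -> nat) (n : nat) : seq bool :=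
  match n with
  | 0 => [:: true]
  | n'.+1 =>
      let cs := build p alpha n' in
      let k := if nth true cs n' then p - 2 else p - 3 in
      cs ++ [seq (i.+1 != alpha n) | i <- iota 0 k]
  end.

Definition is_white (p : nat) (alpha : nat -> nat) (x : nat) : bool :=
  nth true (build p alpha x) x.-1.

Definition sons (p : nat) (alpha : nat -> nat) (nu : nat) : seq nat :=
  iota (size (build p alpha nu.-1)).+1
       (size (build p alpha nu) - size (build p alpha nu.-1)).

Definition assignment (p : nat) (alpha : nat -> nat) : Prop :=
  forall nu, 0 < nu -> 0 < alpha nu <= size (sons p alpha nu).

Definition preferred_son (p : nat) (alpha : nat -> nat) (nu s : nat) : Prop :=
  [/\ s \in sons p alpha nu, code_ends0 p s
    & forall w, is_metallic_code p nu w -> is_metallic_code p s (rcons w 0)].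

Definition preferred_son_property (p : nat) (alpha : nat -> nat) : Prop :=
  forall nu, 0 < nu ->
    exists s, preferred_son p alpha nu s /\
      (forall s', s' \in sons p alpha nu -> code_ends0 p s' -> s' = s).

(* Main.v *)
Require Import Defs.
From mathcomp Require Import all_boot zify.
Set Implicit Arguments. Unset Strict Implicit. Unset Printing Implicit Defensive.

Fixpoint okf (p : nat) (s : bool) (w : seq nat) : bool :=
  match w with
  | [::] => true
  | a :: w' => if a == p - 3 then ~~ s && okf p true w'
               else if a == p - 4 then okf p s w' else okf p false w'
  end.

Definition Pf (p : nat) (w : seq nat) : Prop :=
  exists j, prefix (rcons (nseq j (p - 4)) (p - 3)) w.

Lemma Pf_nil p : ~ Pf p [::].
Proof. by case=> j; case: j. Qed.

Lemma Fb_nil p : ~ has_forbidden_factor p [::].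
Proof. by case=> j. Qed.

Lemma Pf_cons p a w : 4 <= p ->
  Pf p (a :: w) <-> a = p - 3 \/ (a = p - 4 /\ Pf p w).
Proof.
move=> p4; split.
- case=> -[|j] /=.
  + by case/andP => /eqP <- _; left.
  + by case/andP => /eqP <- H; right; split => //; exists j.
- case=> [->|[-> [j H]]].
  + by exists 0; rewrite /= eqxx prefix0s.
  + by exists j.+1; rewrite /= eqxx.
Qed.

Lemma Fb_cons p a w :
  has_forbidden_factor p (a :: w) <-> (a = p - 3 /\ Pf p w) \/ has_forbidden_factor p w.
Proof.
rewrite /has_forbidden_factor /Pf; split.
- case=> j; rewrite infix_consl /= => /orP [/andP [/eqP -> H]|H].
  + by left; split => //; exists j.
  + by right; exists j.
- case=> [[-> [j H]]|[j H]]; exists j; rewrite infix_consl.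
  + by rewrite /= eqxx H.
  + by rewrite H orbT.
Qed.

Lemma okf_spec p w : 5 <= p ->
  (okf p false w <-> ~ has_forbidden_factor p w) /\
  (okf p true w <-> ~ has_forbidden_factor p w /\ ~ Pf p w).
Proof.
move=> p5; elim: w => [|a w [IH1 IH2]].
  by split; split => //= _; [apply: Fb_nil | split; [apply: Fb_nil|apply: Pf_nil]].
have cd : p - 4 != p - 3 by apply/eqP; lia.
rewrite /=; case: eqP => [ad|nad].
- rewrite /= IH2; subst a; split; split.
  + by case=> F P; case/Fb_cons => [[_ /P]|/F].
  + move=> H; split => [F|P]; apply: H; rewrite Fb_cons; by [right|left].
  + by [].
  + by case=> _; case; apply/Pf_cons; [lia| left].
- case: eqP => [ac|nac].
  + subst a; rewrite IH1 IH2; split; split.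
    * by move=> F /Fb_cons [[E _]|/F]; [move: cd; rewrite E eqxx|].
    * by move=> F G; apply: F; rewrite Fb_cons; right.
    * case=> F P; split => [/Fb_cons [[E _]|/F]|/Pf_cons]; first by move: cd; rewrite E eqxx.
      -- by [].
      -- by case; [lia | lia | case=> _ /P].
    * case=> F P; split => [G|G]; [apply: F | apply: P]; [rewrite Fb_cons; right| apply/Pf_cons; [lia|right]] => //.
  + rewrite IH1; split; split.
    * by move=> F /Fb_cons [[E _]|/F].
    * by move=> F G; apply: F; rewrite Fb_cons; right.
    * move=> F; split; first by move=> /Fb_cons [[E _]|/F].
      by move/Pf_cons; case; [lia| lia | case].
    * by case=> F _ G; apply: F; rewrite Fb_cons; right.
Qed.

Lemma metal_pair1 p n : (metal_pair p n.+1).1 = metal p n.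
Proof. by rewrite /metal /=; case: (metal_pair p n). Qed.

Lemma metal_S p n : metal p n.+1 = (p - 2) * metal p n - (metal_pair p n).1.
Proof. by rewrite /metal /=; case: (metal_pair p n). Qed.

Lemma metal_pair_dbl p n : 5 <= p -> 2 * (metal_pair p n).1 <= (metal_pair p n).2.
Proof.
move=> p5; elim: n => [|n IH] //=.
case: (metal_pair p n) IH => a b /= IH.
have : 3 * b <= (p - 2) * b by apply: leq_mul => //; lia.
lia.
Qed.

Lemma metal0 p : metal p 0 = 1. Proof. by []. Qed.
Lemma metal1 p : metal p 1 = p - 2. Proof. by rewrite /metal /= muln1 subn0. Qed.

Lemma metal_dbl p n : 5 <= p -> 2 * metal p n <= metal p n.+1.
Proof. by move=> p5; rewrite -metal_pair1; apply: metal_pair_dbl. Qed.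

Lemma metal_gt0 p n : 5 <= p -> 0 < metal p n.
Proof.
move=> p5; elim: n => [|n IH] //; have := metal_dbl n p5; lia.
Qed.

Lemma metal_rec p n : 5 <= p -> metal p n.+2 + metal p n = (p - 2) * metal p n.+1.
Proof.
move=> p5; rewrite (metal_S p n.+1) metal_pair1.
have := metal_dbl n p5; have : 3 * metal p n.+1 <= (p - 2) * metal p n.+1 by apply: leq_mul => //; lia.
lia.
Qed.

Lemma metal_mono p i j : 5 <= p -> i <= j -> metal p i <= metal p j.
Proof.
move=> p5 /subnKC <-; elim: (j - i) => [|k IH]; first by rewrite addn0.
rewrite addnS; apply: leq_trans IH _; have := metal_dbl (i + k) p5; lia.
Qed.

Lemma metal_smono p i j : 5 <= p -> i < j -> metal p i < metal p j.
Proof.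
move=> p5 ij; apply: leq_trans (metal_mono p5 ij).
have := metal_dbl i p5; have := metal_gt0 i p5; lia.
Qed.

Fixpoint smet p k := if k is k'.+1 then smet p k' + metal p k' else 0.

Lemma metal_id p k : 5 <= p ->
  metal p k.+1 = 1 + (p - 3) * metal p k + (p - 4) * smet p k.
Proof.
move=> p5; elim: k => [|k IH]; first by rewrite metal1 /= metal0; lia.
have R := metal_rec k p5.
rewrite /= mulnDr.
have E1 : (p - 2) * metal p k.+1 = (p - 3) * metal p k.+1 + metal p k.+1.
  by rewrite -{3}(mul1n (metal p k.+1)) -mulnDl; congr (_ * _); lia.
have E2 : (p - 3) * metal p k = (p - 4) * metal p k + metal p k.
  by rewrite -{3}(mul1n (metal p k)) -mulnDl; congr (_ * _); lia.
lia.
Qed.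

Fixpoint vg (f : nat -> nat) (w : seq nat) : nat :=
  if w is a :: w' then a * f (size w') + vg f w' else 0.

Definition vl p := vg (metal p).

Lemma vg_rcons f u a : vg f (rcons u a) = vg (fun i => f i.+1) u + a * f 0.
Proof. by elim: u => [|b u IH] /=; [rewrite add0n addn0 | rewrite size_rcons IH addnA]. Qed.

Lemma vg_ext f g w : (forall i, f i = g i) -> vg f w = vg g w.
Proof. by move=> E; elim: w => [|a w IH] //=; rewrite E IH. Qed.

Lemma vg_le f g w : (forall i, f i <= g i) -> vg f w <= vg g w.
Proof. by move=> E; elim: w => [|a w IH] //=; apply: leq_add => //; apply: leq_mul. Qed.

Lemma vg_add f g w : vg (fun i => f i + g i) w = vg f w + vg g w.
Proof. by elim: w => [|a w IH] //=; rewrite IH mulnDr; lia. Qed.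

Lemma vg_mulc k f w : vg (fun i => k * f i) w = k * vg f w.
Proof. by elim: w => [|a w IH] /=; [rewrite muln0 | rewrite IH mulnDr mulnCA]. Qed.

Definition mprev p i := if i is j.+1 then metal p j else 0.

Lemma vl_shift_id p w : 5 <= p ->
  vl p (rcons w 0) + vg (mprev p) w = (p - 2) * vl p w.
Proof.
move=> p5; rewrite /vl vg_rcons mul0n addn0 -vg_add -vg_mulc; apply: vg_ext => -[|i] /=.
  by rewrite metal1 metal0 muln1 addn0.
by rewrite metal_rec.
Qed.

Lemma vprev_rcons p u a : vg (mprev p) (rcons u a) = vl p u.
Proof. by rewrite vg_rcons muln0 addn0. Qed.

Lemma vl_rcons p u a : vl p (rcons u a) = vl p (rcons u 0) + a.
Proof. by rewrite /vl !vg_rcons metal0 mul0n muln1 addn0. Qed.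

Lemma vl_rcons0_ge p u : 5 <= p -> 2 * vl p u <= vl p (rcons u 0).
Proof.
move=> p5; rewrite /vl vg_rcons mul0n addn0 -vg_mulc; apply: vg_le => i; exact: metal_dbl.
Qed.

Lemma word_valueE p w : word_value p w = vl p w.
Proof.
elim: w => [|a w IH]; first by rewrite /word_value big_ord0.
rewrite /word_value /= rev_cons big_ord_recr /= nth_rcons size_rev ltnn eqxx.
rewrite /vl /= -/(vl p w) -IH /word_value addnC; congr (_ + _); apply: eq_bigr => i _.
by rewrite nth_rcons size_rev ltn_ord.
Qed.

Lemma okf_mono p w : okf p true w -> okf p false w.
Proof.
elim: w => [|a w IH] //=; case: ifP => // _.
by case: ifP => // _; apply: IH.
Qed.

Lemma okf_tail p s a w : okf p s (a :: w) -> okf p false w.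
Proof.
rewrite /=; case: ifP => _; first by case/andP => _ /okf_mono.
by case: ifP => // _; case: s => // /okf_mono.
Qed.

Lemma bounds p w : 5 <= p -> all (fun a => a <= p - 3) w ->
  (okf p false w -> vl p w < metal p (size w)) /\
  (okf p true w -> vl p w <= (p - 4) * smet p (size w)).
Proof.
move=> p5; elim: w => [|a w IH] /=; first by rewrite metal0.
case/andP => ad /IH [IA IB].
rewrite /vl /= -/(vl p w) (metal_id (size w) p5) mulnDr.
set m := metal p (size w); set s := smet p (size w).
have mp : 0 < m by apply: metal_gt0.
case: eqP => [ea|nea].
  subst a; split => //= /IB; move: ((p-3)*m) ((p-4)*s) => X Y; lia.
have a1 : (a + 1) * m <= (p - 3) * m by apply: leq_mul => //; lia.
have E : (a + 1) * m = a * m + m by rewrite mulnDl mul1n.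
case: eqP => [ec|nec].
  have a3 : (p - 4) * m + m = (p - 3) * m.
    by rewrite -{2}(mul1n m) -mulnDl; congr (_ * _); lia.
  rewrite ec; split => [/IA|/IB]; move: ((p-3)*m) ((p-4)*s) ((p-4)*m) a3 => X Y Z; lia.
have a2 : (a + 1) * m <= (p - 4) * m by apply: leq_mul => //; lia.
split => /IA; move: ((p-3)*m) ((p-4)*s) ((p-4)*m) ((a+1)*m) (a*m) a1 a2 E => X Y Z U V; lia.
Qed.

Lemma vl_cons p a w : vl p (a :: w) = a * metal p (size w) + vl p w.
Proof. by []. Qed.

Lemma uniq_same_size p u v : 5 <= p ->
  all (fun a => a <= p - 3) u -> okf p false u ->
  all (fun a => a <= p - 3) v -> okf p false v ->
  size u = size v -> vl p u = vl p v -> u = v.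
Proof.
move=> p5; elim: u v => [|a u IH] [|b v] //= /andP [au alu] oku /andP [bv alv] okv [suv].
have oku' := okf_tail oku; have okv' := okf_tail okv.
rewrite /vl /= -!/(vl p _) -suv => E.
have [Bu _] := bounds p5 alu; have [Bv _] := bounds p5 alv.
have Hu := Bu oku'; have Hv := Bv okv'. rewrite -suv in Hv.
set m := metal p (size u) in E Hu Hv.
case: (ltngtP a b) => [ab|ba|ab].
- have : (a + 1) * m <= b * m by apply: leq_mul => //; lia.
  rewrite mulnDl mul1n; lia.
- have : (b + 1) * m <= a * m by apply: leq_mul => //; lia.
  rewrite mulnDl mul1n; lia.
- subst b; congr (_ :: _); apply: IH => //; lia.
Qed.

Definition code p n w := [&& all (fun a => a <= p - 3) w, head 0 w != 0,
  vl p w == n & okf p false w].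

Lemma codeE p n w : 5 <= p -> is_metallic_code p n w <-> code p n w.
Proof.
move=> p5; have [S1 _] := okf_spec w p5; rewrite /is_metallic_code /code word_valueE.
split.
- case=> -> -> -> /S1 ->; by rewrite eqxx.
- by case/and4P => -> -> /eqP -> /S1.
Qed.

Lemma code_size p n w : 5 <= p -> code p n w ->
  metal p (size w).-1 <= n < metal p (size w).
Proof.
move=> p5 /and4P [al h0 /eqP <- ok]; case: w al h0 ok => [|a w] //= /andP [ad al] a0 ok.
have [B _] := bounds p5 (w := a :: w) ltac:(by rewrite /= ad al).
rewrite B // andbT /vl /= -/(vl p w).
have : 1 * metal p (size w) <= a * metal p (size w) by apply: leq_mul => //; lia.
lia.
Qed.

Lemma code_uniq p n u v : 5 <= p -> code p n u -> code p n v -> u = v.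
Proof.
move=> p5 cu cv; have su := code_size p5 cu; have sv := code_size p5 cv.
move: cu cv => /and4P [alu _ /eqP eu oku] /and4P [alv _ /eqP ev okv].
apply: uniq_same_size alu oku alv okv _ _ => //; last by rewrite eu ev.
case: (ltngtP (size u) (size v)) => // H.
- have := metal_mono p5 (i := size u) (j := (size v).-1) ltac:(lia); lia.
- have := metal_mono p5 (i := size v) (j := (size u).-1) ltac:(lia); lia.
Qed.

Lemma exist_words p k : 5 <= p ->
  (forall n, n < metal p k -> exists w,
     [/\ size w = k, all (fun a => a <= p - 3) w, okf p false w & vl p w = n]) /\
  (forall n, n <= (p - 4) * smet p k -> exists u,
     [/\ size u = k, all (fun a => a <= p - 3) u, okf p true u & vl p u = n]).
Proof.
move=> p5; have cd : (p - 4 == p - 3) = false by apply/eqP; lia.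
elim: k => [|k [E F]].
  split => n /=; rewrite ?metal0 ?muln0 => H; exists [::]; split => //; rewrite /vl /=; lia.
rewrite (metal_id k p5) /=.
set m := metal p k; set s := smet p k.
have mp : 0 < m by apply: metal_gt0.
have dm : forall n, n = (n %/ m) * m + n %% m by move=> n; apply: divn_eq.
have rm : forall n, n %% m < m by move=> n; apply: ltn_pmod.
split => n Hn.
- case: (leqP ((p - 3) * m) n) => H.
  + have [u [su alu oku vu]] := F (n - (p - 3) * m) ltac:(lia).
    exists ((p - 3) :: u); split => //=; first by rewrite su.
    * by rewrite leqnn alu.
    * by rewrite eqxx.
    * by rewrite /vl /= -/(vl p u) su vu; lia.
  + have e3 : n %/ m < p - 3 by rewrite ltn_divLR.
    have [w [sw alw okw vw]] := E (n %% m) (rm n).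
    exists (n %/ m :: w); split => //=; first by rewrite sw.
    * by rewrite alw andbT; lia.
    * rewrite (_ : (n %/ m == p - 3) = false); last by apply/eqP; lia.
      by case: ifP.
    * by rewrite /vl /= -/(vl p w) sw vw -dm.
- rewrite mulnDr in Hn.
  case: (leqP ((p - 4) * m) n) => H.
  + have [u [su alu oku vu]] := F (n - (p - 4) * m) ltac:(lia).
    exists ((p - 4) :: u); split => //=; first by rewrite su.
    * by rewrite alu andbT; lia.
    * by rewrite cd eqxx.
    * by rewrite /vl /= -/(vl p u) su vu; lia.
  + have e3 : n %/ m < p - 4 by rewrite ltn_divLR.
    have [w [sw alw okw vw]] := E (n %% m) (rm n).
    exists (n %/ m :: w); split => //=; first by rewrite sw.
    * by rewrite alw andbT; lia.
    * rewrite (_ : (n %/ m == p - 3) = false); last by apply/eqP; lia.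
      by rewrite (_ : (n %/ m == p - 4) = false) //; apply/eqP; lia.
    * by rewrite /vl /= -/(vl p w) sw vw -dm.
Qed.

Lemma metal_gtn p k : 5 <= p -> k < metal p k.
Proof.
move=> p5; elim: k => [|k IH]; first by rewrite metal0.
by apply: leq_trans (metal_smono p5 (ltnSn k)).
Qed.

Lemma strip p w n : 5 <= p -> 0 < n -> all (fun a => a <= p - 3) w -> okf p false w ->
  vl p w = n -> exists v, code p n v.
Proof.
move=> p5 n0; elim: w => [|a w IH] /=; first by move=> _ _ E; rewrite /vl /= in E; lia.
case/andP => ad al ok.
case: (posnP a) => [a0|ap].
- subst a; rewrite /vl /= mul0n add0n => E; apply: IH => //.
  have h3 : (0 == p - 3) = false by apply/eqP; lia.
  have h4 : (0 == p - 4) = false by apply/eqP; lia.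
  by move: ok; rewrite /= h3 h4.
- move=> E; exists (a :: w); apply/and4P; split.
  + by rewrite /= ad al.
  + by rewrite /= -lt0n.
  + by rewrite E.
  + exact: ok.
Qed.

Lemma code_exists p n : 5 <= p -> 0 < n -> exists w, code p n w.
Proof.
move=> p5 n0; have [E _] := exist_words n p5.
have [w [_ al ok vw]] := E n (metal_gtn n p5).
exact: strip p5 n0 al ok vw.
Qed.

Definition kk p alpha n := if nth true (build p alpha n) n then p - 2 else p - 3.
Definition SS p alpha n := size (build p alpha n).

Lemma build_S p alpha n : build p alpha n.+1 =
  build p alpha n ++ [seq (i.+1 != alpha n.+1) | i <- iota 0 (kk p alpha n)].
Proof. by []. Qed.

Lemma SS_S p alpha n : SS p alpha n.+1 = SS p alpha n + kk p alpha n.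
Proof. by rewrite /SS build_S size_cat size_map size_iota. Qed.

Lemma kk_ge p alpha n : p - 3 <= kk p alpha n <= p - 2.
Proof. rewrite /kk; case: ifP => _; lia. Qed.

Lemma SS0 p alpha : SS p alpha 0 = 1. Proof. by []. Qed.

Lemma SS_gt p alpha n : 5 <= p -> n < SS p alpha n.
Proof.
move=> p5; elim: n => [|n IH]; first by [].
rewrite SS_S; have := kk_ge p alpha n; lia.
Qed.

Lemma SS_mono p alpha i j : i <= j -> SS p alpha i <= SS p alpha j.
Proof.
move/subnKC <-; elim: (j - i) => [|k IH]; first by rewrite addn0.
by rewrite addnS SS_S; apply: leq_trans IH _; apply: leq_addr.
Qed.

Lemma build_prefix p alpha m n : m <= n ->
  exists t, build p alpha n = build p alpha m ++ t.
Proof.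
move/subnKC <-; elim: (n - m) => [|k [t IH]]; first by exists [::]; rewrite addn0 cats0.
by rewrite addnS build_S IH -catA; eexists.
Qed.

Lemma sons_S p alpha n : sons p alpha n.+1 =
  iota (SS p alpha n).+1 (kk p alpha n).
Proof. by rewrite /sons /= -/(SS p alpha n.+1) -/(SS p alpha n) SS_S addKn. Qed.

Lemma count_iota_eq b m k :
  count (fun i => i.+1 == b) (iota m k) = (m < b <= m + k).
Proof.
elim: k m => [|k IH] m /=; first by rewrite addn0; case: (ltnP m b) => //= H; lia.
rewrite IH; lia.
Qed.

Lemma count_build p alpha n : assignment p alpha ->
  count negb (build p alpha n) = n.
Proof.
move=> asg; elim: n => [|n IH]; first by [].
rewrite build_S count_cat IH count_map.
have := asg n.+1 (ltn0Sn n); rewrite sons_S size_iota => H.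
rewrite (eq_count (a2 := fun i => i.+1 == alpha n.+1)); last by move=> i /=; rewrite negbK.
by rewrite count_iota_eq add0n H addn1.
Qed.

Lemma key_eq p alpha n : 5 <= p ->
  SS p alpha n + count negb (take n (build p alpha n)) = 1 + (p - 2) * n.
Proof.
move=> p5; elim: n => [|n IH]; first by rewrite muln0.
have lt := SS_gt alpha n p5.
rewrite build_S takel_cat // (take_nth true lt) -cats1 count_cat SS_S mulnS.
rewrite /kk; move: IH; rewrite /SS in lt *.
case: (nth true (build p alpha n) n) => /=; move: ((p - 2) * n) => X; lia.
Qed.

Lemma key_eqN p alpha n N : 5 <= p -> n <= N ->
  SS p alpha n + count negb (take n (build p alpha N)) = 1 + (p - 2) * n.
Proof.
move=> p5 nN; have [t ->] := build_prefix p alpha nN.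
rewrite takel_cat; first exact: key_eq.
exact: ltnW (SS_gt alpha n p5).
Qed.

Lemma B_lower p alpha y N t : assignment p alpha -> y <= N -> SS p alpha y <= t ->
  y <= count negb (take t (build p alpha N)).
Proof.
move=> asg yN yt; have [r ->] := build_prefix p alpha yN.
rewrite take_cat; case: ltnP => H; first by rewrite /SS in yt; lia.
by rewrite count_cat count_build //; apply: leq_addr.
Qed.

Lemma B_upper p alpha y N t : assignment p alpha -> y <= N -> t <= SS p alpha y ->
  count negb (take t (build p alpha N)) <= y.
Proof.
move=> asg yN ty; have [r ->] := build_prefix p alpha yN.
rewrite takel_cat //.
rewrite -{2}(@count_build p alpha y asg) -{2}(cat_take_drop t (build p alpha y)) count_cat.
exact: leq_addr.
Qed.

Lemma okf_catl p s u v : okf p s (u ++ v) -> okf p s u.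
Proof.
elim: u s => [|a u IH] s //=.
case: ifP => _; first by case/andP => -> /IH.
by case: ifP => _ /IH.
Qed.

Lemma okf_rcons0 p s w : 5 <= p -> okf p s w -> okf p s (rcons w 0).
Proof.
move=> p5; have h3 : (0 == p - 3) = false by apply/eqP; lia.
have h4 : (0 == p - 4) = false by apply/eqP; lia.
elim: w s => [|a w IH] s /=; first by rewrite h3 h4.
case: ifP => _; first by case/andP => -> /IH.
by case: ifP => _ /IH.
Qed.

Lemma code_init p n u a : 5 <= p -> code p n (rcons u a) -> u != [::] ->
  code p (vl p u) u.
Proof.
move=> p5 /and4P [al h0 _ ok] un; apply/and4P; split => //.
- by move: al; rewrite all_rcons => /andP [].
- by case: u un h0 ok {al}.
- by move: ok; rewrite -cats1 => /okf_catl.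
Qed.

Lemma code_rcons0 p n w : 5 <= p -> code p n w -> code p (vl p (rcons w 0)) (rcons w 0).
Proof.
move=> p5 /and4P [al h0 _ ok]; apply/and4P; split => //.
- by rewrite all_rcons al andbT.
- by case: w h0 {al ok}.
- exact: okf_rcons0.
Qed.

Lemma main p alpha : 5 <= p -> assignment p alpha -> forall n w, code p n.+1 w ->
  SS p alpha n < vl p (rcons w 0) <= SS p alpha n.+1.
Proof.
move=> p5 asg; elim/ltn_ind => n IH w cw.
have cw' := cw; move: cw' => /and4P [al h0 /eqP vw ok].
case/lastP: w cw al h0 vw ok => [|u a] cw al h0 vw ok; first by [].
have Hs := vl_shift_id (rcons u a) p5; rewrite vprev_rcons vw in Hs.
have Hn := vl_rcons p u a; rewrite vw in Hn.
have ad : a <= p - 3 by move: al; rewrite all_rcons => /andP [].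
have H2 := vl_rcons0_ge u p5.
have eqN := key_eqN alpha (n := n.+1) (N := n.+1) p5 (leqnn _).
have eq0 := key_eqN alpha (n := n) (N := n.+1) p5 (leqnSn n).
move: Hs eqN eq0; rewrite mulnS.
set sig := vl p (rcons (rcons u a) 0).
set P := (p - 2) * n.
set Bn := count negb (take n.+1 (build p alpha n.+1)).
set B0 := count negb (take n (build p alpha n.+1)).
rewrite -/(SS p alpha n.+1) -/(SS p alpha n) => Hs eqN eq0.
have k0 := kk_ge p alpha.
case: (eqVneq u [::]) => [u0|un].
- subst u; move: Hs Hn H2; rewrite /vl /= => Hs Hn H2.
  have : Bn <= 1.
    apply: B_upper => //.
    rewrite (SS_S p alpha 0) SS0; have := k0 0; lia.
  lia.
- have cu := code_init p5 cw un.
  have /andP [M1 _] := code_size p5 cu; have M0 := metal_gt0 (size u).-1 p5.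
  have [x ex] : exists x, vl p u = x.+1 by exists (vl p u).-1; lia.
  rewrite ex in cu H2 Hs.
  have xn : x < n by lia.
  have [IH1 IH2] := andP (IH x xn u cu).
  have : Bn <= x.+2.
    apply: B_upper => //.
    rewrite SS_S; have := k0 x.+1; lia.
  have : x <= B0.
    apply: B_lower => //; lia.
  lia.
Qed.

Lemma mem_sons p alpha n s :
  (s \in sons p alpha n.+1) = (SS p alpha n < s <= SS p alpha n.+1).
Proof. by rewrite sons_S mem_iota SS_S addSn ltnS. Qed.

Lemma pref p alpha n w : 5 <= p -> assignment p alpha -> code p n.+1 w ->
  preferred_son p alpha n.+1 (vl p (rcons w 0)).
Proof.
move=> p5 asg cw; split.
- by rewrite mem_sons; apply: main.
- exists (rcons w 0); split; last by rewrite last_rcons.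
  by apply/codeE => //; apply: code_rcons0 cw.
- move=> w' /(codeE _ _ p5) cw'.
  rewrite (code_uniq p5 cw' cw); apply/codeE => //; exact: code_rcons0 cw.
Qed.

Lemma pref_uniq p alpha n w s' : 5 <= p -> assignment p alpha -> code p n.+1 w ->
  s' \in sons p alpha n.+1 -> code_ends0 p s' -> s' = vl p (rcons w 0).
Proof.
move=> p5 asg cw; rewrite mem_sons => /andP [l1 l2] [w'' [/(codeE _ _ p5) cm l0]].
case/lastP: w'' cm l0 => [|u b] cm; first by case/and4P: cm.
rewrite last_rcons => b0; subst b.
have un : u != [::] by apply/eqP => u0; subst u; case/and4P: cm.
have cu := code_init p5 cm un.
have /andP [M1 _] := code_size p5 cu; have M0 := metal_gt0 (size u).-1 p5.
have [y ey] : exists y, vl p u = y.+1 by exists (vl p u).-1; lia.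
rewrite ey in cu.
have /andP [h1 h2] := main p5 asg cu.
have vs : vl p (rcons u 0) = s' by case/and4P: cm => _ _ /eqP.
rewrite vs in h1 h2.
have yn : y = n.
  case: (ltngtP y n) => // H.
  - have := SS_mono p alpha H; lia.
  - have := SS_mono p alpha H; lia.
subst y; by rewrite -vs (code_uniq p5 cu cw).
Qed.

Lemma vl_nseq0 p k : vl p (nseq k 0) = 0.
Proof. by elim: k => //= k; rewrite /vl /= => ->. Qed.

Lemma rcons_nseq0 k : rcons (nseq k 0) 0 = nseq k.+1 0.
Proof. by elim: k => //= k ->. Qed.

Lemma okf_nseq0 p k : 5 <= p -> okf p false (nseq k 0).
Proof.
move=> p5; have h3 : (0 == p - 3) = false by apply/eqP; lia.
have h4 : (0 == p - 4) = false by apply/eqP; lia.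
by elim: k => //= k IH; rewrite h3 h4.
Qed.

Lemma code_metal p n : 5 <= p -> code p (metal p n) (1 :: nseq n 0).
Proof.
move=> p5; apply/and4P; split => //.
- by rewrite /= all_nseq /=; apply/andP; split => //; [lia | apply/implyP].
- by rewrite /vl /= -/(vl p _) vl_nseq0 size_nseq mul1n addn0.
- have H : okf p false (nseq n 0) by apply: okf_nseq0.
  rewrite /= (_ : (1 == p - 3) = false); last by apply/eqP; lia.
  by case: ifP.
Qed.

Theorem theorem7 (p : nat) (alpha : nat -> nat) :
  5 <= p -> assignment p alpha ->
  preferred_son_property p alpha /\
  (forall n : nat, preferred_son p alpha (metal p n) (metal p n.+1)).
Proof.
move=> p5 asg; split.
- move=> [|n] // _.
  have [w cw] := code_exists p5 (ltn0Sn n).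
  exists (vl p (rcons w 0)); split; first exact: pref.
  move=> s' H1 H2; exact: pref_uniq cw H1 H2.
- move=> n; have cm := code_metal n p5.
  have M0 := metal_gt0 n p5.
  have E : vl p (rcons (1 :: nseq n 0) 0) = metal p n.+1.
    by rewrite rcons_cons rcons_nseq0 vl_cons vl_nseq0 size_nseq mul1n addn0.
  rewrite -E; move: cm; rewrite -(prednK M0) => cm.
  exact: pref.
Qed.
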